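(* Let $d,k\in\mathbb N^+$ and let $G=(V,E)$ be a graph. If $|V^G_{[1,d]}|>(d+1)(k-1)^2$, then $G$ has a $k$-edge induced subgraph.
   Context: All graphs are simple (finite, nonempty vertex set, undirected, no loops or multiple edges). $V^G_{[1,d]}:=\{v\in V: 1\le \deg(v)\le d\}$. A $k$-edge induced subgraph of $G$ is an induced subgraph $G[S]$ ($S\neq\emptyset$) with exactly $k$ edges. *)

(* Defs.v *)
From mathcomp Require Import all_boot.
Set Implicit Arguments. Unset Strict Implicit. Unset Printing Implicit Defensive.

Definition simple_graph (T : finType) (e : rel T) : Prop :=
  symmetric e /\ irreflexive e.

Definition deg (T : finType) (e : rel T) (x : T) : nat := #|[set y | e x y]|.

Definition V1d (T : finType) (e : rel T) (d : nat) : {set T} :=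
  [set x | 1 <= deg e x <= d].

Definition induced_edges (T : finType) (e : rel T) (S : {set T}) : {set {set T}} :=
  [set P : {set T} | (P \subset S) &&
     [exists x, exists y, e x y && (P == [set x; y])]].

Definition has_k_edge_induced (T : finType) (e : rel T) (k : nat) : Prop :=
  exists S : {set T}, S != set0 /\ #|induced_edges e S| = k.

(* Main.v *)
Require Import Defs.
From mathcomp Require Import all_boot.
Set Implicit Arguments. Unset Strict Implicit. Unset Printing Implicit Defensive.

Lemma ubound (T U : finType) (A : {set T}) (B : {set U}) (R : T -> U -> bool) :
  (forall b, b \in B -> exists2 a, a \in A & R a b) ->
  #|B| <= \sum_(a in A) #|[set b in B | R a b]|.
Proof.
move=> H; rewrite -sum1_card.
have -> : \sum_(a in A) #|[set b in B | R a b]| = \sum_(a in A) \sum_(b in B) (R a b : nat).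
  apply: eq_bigr => a _; rewrite -sum1dep_card big_mkcondr /=.
  by apply: eq_bigr => b _; case: (R a b).
rewrite (exchange_big) /=; apply: leq_sum => b Hb.
case: (H b Hb) => a Ha Rab; rewrite (bigD1 a) //= Rab; exact: leq_addr.
Qed.

Lemma ie0 (T : finType) (e : rel T) : induced_edges e set0 = set0.
Proof.
apply/setP => P; rewrite !inE subset0; apply/negbTE/andP => [[/eqP -> /existsP [x /existsP [y /andP [_ /eqP H]]]]].
by move: (set21 x y); rewrite -H inE.
Qed.

Lemma addv (T : finType) (e : rel T) (A : {set T}) v :
  symmetric e -> irreflexive e -> v \notin A ->
  #|induced_edges e (v |: A)| = #|induced_edges e A| + #|A :&: [set u | e v u]|.
Proof.
move=> sym irr vA.
pose F := [set [set v; u] | u in A :&: [set u | e v u]].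
have Heq : induced_edges e (v |: A) = induced_edges e A :|: F.
  apply/setP => P; rewrite !inE; apply/idP/idP.
  - case/andP => sP /existsP [x /existsP [y /andP [exy /eqP PE]]].
    case vP: (v \in P).
    + apply/orP; right; apply/imsetP.
      have : v \in [set x; y] by rewrite -PE.
      rewrite !inE => /orP [/eqP vx | /eqP vy].
      * exists y; last by rewrite PE vx.
        have yP : y \in P by rewrite PE !inE eqxx orbT.
        move: (subsetP sP y yP); rewrite !inE => /orP [/eqP yv|yA].
          by move: exy; rewrite -vx yv irr.
        by rewrite yA /= vx.
      * exists x; last by rewrite PE vy setUC.
        have xP : x \in P by rewrite PE !inE eqxx.
        move: (subsetP sP x xP); rewrite !inE => /orP [/eqP xv|xA].
          by move: exy; rewrite -vy xv irr.
        by rewrite xA /= vy sym.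
    + apply/orP; left; apply/andP; split.
        apply/subsetP => z zP; move: (subsetP sP z zP); rewrite !inE.
        by case/orP => // /eqP zv; move: vP; rewrite -zv zP.
      by apply/existsP; exists x; apply/existsP; exists y; rewrite exy PE eqxx.
  - case/orP.
      move=> /andP [sP ex]; rewrite ex andbT.
      by apply: (subset_trans sP); apply: subsetUr.
    case/imsetP => u; rewrite !inE => /andP [uA evu] ->.
    apply/andP; split.
      by apply/subsetP => z; rewrite !inE => /orP [->|/eqP ->]; rewrite ?eqxx ?uA ?orbT.
    by apply/existsP; exists v; apply/existsP; exists u; rewrite evu eqxx.
rewrite Heq cardsU.
have -> : induced_edges e A :&: F = set0.
  apply/setP => P; rewrite !inE; apply/negbTE/andP => [[/andP [sP _] /imsetP [u _ PE]]].
  by move: (subsetP sP v); rewrite PE !inE eqxx (negbTE vA) => /(_ isT).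
rewrite cards0 subn0 card_in_imset //.
move=> u1 u2; rewrite !inE => /andP [u1A _] /andP [u2A _] E.
have : u1 \in [set v; u2] by rewrite -E !inE eqxx orbT.
rewrite !inE => /orP [/eqP u1v|/eqP //].
by move: vA; rewrite -u1v u1A.
Qed.

Lemma leaves (T : finType) (e : rel T) (A L : {set T}) :
  symmetric e -> irreflexive e -> [disjoint A & L] ->
  {in L &, forall x y, ~~ e x y} ->
  {in L, forall x, #|A :&: [set u | e x u]| = 1} ->
  #|induced_edges e (A :|: L)| = #|induced_edges e A| + #|L|.
Proof.
move=> sym irr.
have [n] := ubnP #|L|; elim: n L => // n IH L Ln dAL indL one.
have [->|[x xL]] := set_0Vmem L; first by rewrite setU0 cards0 addn0.
have LE : L = x |: (L :\ x) by rewrite setD1K.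
have xL' : x \notin L :\ x by rewrite !inE eqxx.
have sub : L :\ x \subset L by apply: subsetDl.
rewrite LE setUCA addv //; last first.
  rewrite !inE negb_or eqxx /= andbT.
  by rewrite (disjointFl dAL xL).
rewrite IH; first last.
- by move=> y yL; apply: one; apply: (subsetP sub).
- by move=> y z yL zL; apply: indL; apply: (subsetP sub).
- exact: (disjointWr sub dAL).
- by rewrite (cardsD1 x L) xL in Ln.
rewrite setIUl.
have -> : (L :\ x) :&: [set u | e x u] = set0.
  apply/setP => y; rewrite !inE; apply/negbTE; apply/andP => [[/andP [_ yL] exy]].
  by move: (indL x y xL yL); rewrite exy.
rewrite setU0 one // cardsU1 xL'. by rewrite /= addn1 add1n addnS.

Qed.

Lemma subset_card (T : finType) (Y : {set T}) t :
  t <= #|Y| -> exists2 Z : {set T}, Z \subset Y & #|Z| = t.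
Proof.
elim: t => [|t IH] Ht; first by exists set0; rewrite ?sub0set ?cards0.
case: (IH (ltnW Ht)) => Z sZ cZ.
have : ~~ (Y \subset Z).
  by apply/negP => /subset_leq_card; rewrite cZ leqNgt Ht.
case/subsetPn => y yY yZ.
exists (y |: Z); first by rewrite subUset sub1set yY sZ.
by rewrite cardsU1 yZ cZ.
Qed.

Lemma ivt (T : finType) (e : rel T) (C I : {set T}) (p : T -> T) :
  symmetric e -> irreflexive e ->
  {in C, forall y, p y \in I} ->
  {in C, forall y, C :&: [set u | e (p y) u] = [set y]} ->
  {in I &, forall x y, ~~ e x y} -> [disjoint C & I] ->
  forall (Y : {set T}) n, Y \subset C -> n <= #|induced_edges e Y| + #|Y| ->
  exists S, #|induced_edges e S| = n.
Proof.
move=> sym irr pI pC indI dCI.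
have lv : forall Y Z : {set T}, Z \subset Y -> Y \subset C ->
    #|induced_edges e (Y :|: p @: Z)| = #|induced_edges e Y| + #|Z|.
  move=> Y Z sZY sYC.
  have sZC := subset_trans sZY sYC.
  rewrite leaves //.
  - rewrite card_in_imset // => z1 z2 z1C z2C E.
    apply/set1_inj; rewrite -pC ?E ?pC //; exact: (subsetP sZC).
  - rewrite disjoint_subset; apply/subsetP => x xY; rewrite !inE.
    apply/imsetP => [[z zZ xE]].
    have zC := subsetP sZC z zZ.
    by move: (pI z zC); rewrite -xE (disjointFr dCI (subsetP sYC x xY)).
  - move=> x y /imsetP [z1 z1Z ->] /imsetP [z2 z2Z ->].
    by apply: indI; apply: pI; apply: (subsetP sZC).
  - move=> x /imsetP [z zZ ->].
    have zC := subsetP sZC z zZ.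
    have -> : Y :&: [set u | e (p z) u] = Y :&: (C :&: [set u | e (p z) u]).
      by rewrite setIA (setIidPl sYC).
    by rewrite pC // (setIidPr _) ?cards1 // sub1set (subsetP sZY).
move=> Y0; have [m] := ubnP #|Y0|; elim: m Y0 => // m IH Y Ym n sYC Hn.
have [YE|[y yY]] := set_0Vmem Y.
  exists set0; move: Hn; rewrite YE ie0 !cards0 leqn0 => /eqP -> //.
set Y' := Y :\ y.
have YE : Y = y |: Y' by rewrite setD1K.
have yY' : y \notin Y' by rewrite !inE eqxx.
have sY'C : Y' \subset C by apply: subset_trans sYC; apply: subsetDl.
have cY : #|Y| = #|Y'|.+1 by rewrite YE cardsU1 yY'.
case: (leqP n (#|induced_edges e Y'| + #|Y'|)) => Hn'.
  by apply: (IH Y') => //; rewrite -ltnS -cY.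
have fY : #|induced_edges e Y| <= #|induced_edges e Y'| + #|Y'|.
  rewrite YE addv // leq_add2l; apply: subset_leq_card; exact: subsetIl.
have Hle : #|induced_edges e Y| <= n by apply: leq_trans fY (ltnW Hn').
have Ht : n - #|induced_edges e Y| <= #|Y| by rewrite leq_subLR.
have [Z sZ cZ] := subset_card Ht.
by exists (Y :|: p @: Z); rewrite lv // cZ subnKC.
Qed.

Lemma fin_ex (T : finType) (e : rel T) k (S : {set T}) :
  0 < k -> #|induced_edges e S| = k -> has_k_edge_induced e k.
Proof.
move=> k0 fS; exists S; split => //; apply/negP => /eqP S0.
by move: fS; rewrite S0 ie0 cards0 => k0'; rewrite -k0' in k0.
Qed.

Theorem lemma3p12 (T : finType) (e : rel T) (d k : nat) :
  simple_graph e -> 0 < d -> 0 < k ->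
  (d.+1 * (k.-1) ^ 2 < #|V1d e d|)%N ->
  has_k_edge_induced e k.
Proof.
move=> [sym irr] d0 k0 HW.
set W := V1d e d in HW.
pose indep (I : {set T}) := [forall x in I, forall y in I, ~~ e x y].
have [I0 /andP [sIW indI] maxI] : exists2 I0 : {set T}, (I0 \subset W) && indep I0 &
    forall J : {set T}, (J \subset W) && indep J -> #|J| <= #|I0|.
  case: (@arg_maxnP _ set0 (fun J : {set T} => (J \subset W) && indep J) (fun J => #|J|)); first by rewrite sub0set; apply/forall_inP => x; rewrite inE.
  by move=> J PJ HJ; exists J.
have indI' : {in I0 &, forall x y, ~~ e x y}.
  by move=> x y xI yI; move/forall_inP: indI => /(_ x xI) /forall_inP /(_ y yI).
have degW : forall x, x \in W -> 1 <= #|[set u | e x u]| <= d.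
  by move=> x; rewrite inE.
have HI : (k.-1) ^ 2 < #|I0|.
  have dom : forall w, w \in W :\: I0 -> exists2 x, x \in I0 & e x w.
    move=> w; rewrite inE => /andP [wI wW].
    case: (boolP [exists x in I0, e x w]) => [/exists_inP [x xI exw]|nex].
      by exists x.
    have : (w |: I0 \subset W) && indep (w |: I0).
      rewrite subUset sub1set wW sIW /=.
      apply/forall_inP => x; rewrite !inE => /orP [/eqP ->|xI];
        apply/forall_inP => y; rewrite !inE => /orP [/eqP ->|yI].
      - by rewrite irr.
      - apply/negP => ewy; move/negP: nex; apply; apply/exists_inP; exists y => //.
        by rewrite sym.
      - by apply/negP => exw; move/negP: nex; apply; apply/exists_inP; exists x.
      - exact: indI'.
    by move/maxI; rewrite cardsU1 wI ltnn.
  have H1 := ubound dom.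
  have H2 : \sum_(a in I0) #|[set b in W :\: I0 | e a b]| <= #|I0| * d.
    rewrite -sum_nat_const; apply: leq_sum => x xI.
    have /andP [_ dx] := degW x (subsetP sIW x xI).
    apply: leq_trans dx; apply: subset_leq_card; apply/subsetP => u; rewrite !inE.
    by case/andP.
  have HW' : #|W| <= d.+1 * #|I0|.
    rewrite -(cardsID I0 W) (setIidPr sIW) mulSn mulnC.
    by rewrite leq_add2l (leq_trans H1 H2).
  by rewrite -(ltn_pmul2l (ltn0Sn d)); apply: leq_trans HW HW'.
case: (boolP [exists y, k <= #|I0 :&: [set u | e y u]|]).
  case/existsP => y Hy.
  have [L sL cL] := subset_card Hy.
  have sLI : L \subset I0 by apply: subset_trans sL (subsetIl _ _).
  have Ly : forall x, x \in L -> e y x.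
    by move=> x /(subsetP sL); rewrite !inE => /andP [_].
  apply: (@fin_ex _ _ k ([set y] :|: L)) => //.
  rewrite leaves //.
  - by rewrite -(setU0 [set y]) addv // ?inE // ie0 set0I !cards0 cL.
  - rewrite disjoint_subset; apply/subsetP => x /set1P ->; rewrite inE; apply/negP => /Ly; by rewrite irr.
  - by move=> a b aL bL; apply: indI'; apply: (subsetP sLI).
  - move=> x xL; rewrite (setIidPl _) ?cards1 // sub1set inE sym; exact: Ly.
rewrite negb_exists => /forallP small.
have small' : forall y, #|I0 :&: [set u | e y u]| <= k.-1.
  by move=> y; move: (small y); rewrite -ltnNge -(ltn_predK k0) ltnS.
pose cov (C : {set T}) := (C \subset ~: I0) && [forall x in I0, exists y in C, e x y].
have cov0 : cov (~: I0).
  rewrite /cov subxx /=; apply/forall_inP => x xI.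
  have /andP [dx _] := degW x (subsetP sIW x xI).
  move: dx; rewrite card_gt0 => /set0Pn [u]; rewrite inE => exu.
  apply/exists_inP; exists u => //; rewrite inE; apply/negP => uI.
  by move: (indI' x u xI uI); rewrite exu.
have [C /andP [sCI covC] minC] : exists2 C : {set T}, cov C &
    forall J : {set T}, cov J -> #|C| <= #|J|.
  case: (@arg_minnP _ (~: I0) cov (fun J => #|J|) cov0).
  by move=> J PJ HJ; exists J.
have covC' : forall x, x \in I0 -> exists2 y, y \in C & e x y.
  by move=> x xI; move/forall_inP: covC => /(_ x xI) /exists_inP.
have dCI : [disjoint C & I0] by rewrite disjoints_subset.
pose p y := odflt y [pick x in I0 | [forall z in C :\ y, ~~ e x z]].
have pP : forall y, y \in C -> (p y \in I0) && [forall z in C :\ y, ~~ e (p y) z].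
  move=> y yC; rewrite /p; case: pickP => [x /andP [xI Hx]|none] /=; first by rewrite xI.
  suff : cov (C :\ y) by move/minC; rewrite (cardsD1 y C) yC ltnn.
  rewrite /cov (subset_trans (subsetDl _ _) sCI) /=.
  apply/forall_inP => x xI; move: (none x); rewrite xI /=. move/negbT; rewrite negb_forall_in.
  case/exists_inP => z zC; rewrite negbK => exz; apply/exists_inP; by exists z.
have pI : {in C, forall y, p y \in I0} by move=> y /pP /andP [].
have pC : {in C, forall y, C :&: [set u | e (p y) u] = [set y]}.
  move=> y yC; have /andP [pyI /forall_inP Hp] := pP y yC.
  apply/setP => z; rewrite !inE; apply/idP/idP.
    case/andP => zC ez; apply/negP => /negP zy.
    by move: (Hp z); rewrite !inE zy zC ez => /(_ isT).
  move/eqP => ->; rewrite yC /=.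
  have [w wC ew] := covC' (p y) pyI.
  case: (eqVneq w y) => [wy|wy]; first by rewrite -{2}wy.
  by move: (Hp w); rewrite !inE wy wC ew => /(_ isT).
have cC : k <= #|C|.
  have H1 := ubound (A := C) (R := fun y x => e y x) (fun x xI =>
    let: ex_intro2 y yC exy := covC' x xI in ex_intro2 _ _ y yC (etrans (sym y x) exy)).
  have H2 : \sum_(a in C) #|[set b in I0 | e a b]| <= #|C| * k.-1.
    rewrite -sum_nat_const; apply: leq_sum => y _.
    apply: leq_trans (small' y); apply: subset_leq_card; apply/subsetP => u; rewrite !inE.
    by [].
  rewrite leqNgt; apply/negP => Ck.
  have : #|C| * k.-1 <= k.-1 ^ 2.
    by rewrite -mulnn leq_mul2r -ltnS (ltn_predK k0) Ck orbT.
  by move=> H3; move: (leq_trans (leq_trans H1 H2) H3); rewrite leqNgt HI.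
have [S fS] := ivt sym irr pI pC indI' dCI (Y := C) (n := k) (subxx C)
  (leq_trans cC (leq_addl _ _)).
exact: (fin_ex k0 fS).
Qed.
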